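(* Let $T_1=(Q_1,\Sigma,\Delta,R_1,q_1^0)$ and $T_2=(Q_2,\Delta,\Omega,R_2,q_2^0)$ be top-down tree transducers, let $A$ be the domain automaton of $T_2$, and let $\hat{T}_1$ be the product construction of $T_1$ and $A$. If a state $(q,S)$ of $\hat{T}_1$ produces a tree $t\in T_\Delta$ on some input $s\in T_\Sigma$ and $S\neq\emptyset$, then $t\in\bigcap_{q_2\in S}\text{dom}(q_2)$.
   Context: A top-down tree transducer $T=(Q,\Sigma,\Delta,R,q_0)$ has finite state set $Q$, ranked input/output alphabets $\Sigma,\Delta$, initial state $q_0$, and finite rule set $R$ of rules $q(a(x_1,\dots,x_k))\to t$ with $a\in\Sigma_k$ ($\Sigma_k$ = symbols of rank $k$) and $t$ a tree over $\Delta$ whose leaves may additionally be of the form $q'(x_i)$, $q'\in Q$, $i\in[k]$; rules are used as rewrite rules in the usual way. A state $q$ produces $t$ on input $s$ if the tree $t$ over $\Delta$ is derivable from $q(s)$; $\text{dom}(q)$ is the set of inputs on which $q$ produces some tree. For $q\in Q$, $a\in\Sigma_k$, $\text{rhs}_T(q,a)$ is the set of right-hand sides of rules with left-hand side $q(a(x_1,\dots,x_k))$; for a set $\Gamma$ of right-hand sides, $\Gamma[x_i]$ is the set of $q'\in Q$ with $q'(x_i)$ occurring in some tree of $\Gamma$. Domain automaton of $T$: the top-down tree automaton (transducer over $\Sigma$ with rules of the form $p(a(x_1,\dots,x_k))\to a(p_1(x_1),\dots,p_k(x_k))$) with states all subsets of $Q$, initial state $\{q_0\}$, rules $S(a(x_1,\dots,x_k))\to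 a(S_1(x_1),\dots,S_k(x_k))$ for every $a\in\Sigma_k$, nonempty $S=\{q_1,\dots,q_n\}\subseteq Q$ and nonempty $\Gamma_j\subseteq\text{rhs}_T(q_j,a)$ ($j\in[n]$), where $S_i=\bigcup_j\Gamma_j[x_i]$, and rules $\emptyset(a(x_1,\dots,x_k))\to a(\emptyset(x_1),\dots,\emptyset(x_k))$ for all $a$. Product construction of transducers $T=(Q,\Sigma,\Delta,R,q_0)$ and $T'=(Q',\Delta,\Omega,R',q'_0)$: the transducer with states $Q\times Q'$, input $\Sigma$, output $\Omega$, initial state $(q_0,q'_0)$, and, for every rule $q(a(x_1,\dots,x_k))\to\xi$ of $T$, every $p\in Q'$ and every tree $\zeta$ derivable from $p(\xi)$ using rules of $T'$ in which the leaves of $\xi$ of the form $q''(x_i)$ are treated as unrewritable symbols and a state $p'$ applied to such a leaf stays as $p'(q''(x_i))$ (so $\zeta$ is a tree over $\Omega$ with leaves possibly of the form $p'(q''(x_i))$), the rule $(q,p)(a(x_1,\dots,x_k))\to\zeta'$, where $\zeta'$ is obtained from $\zeta$ by replacing each $p'(q''(x_i))$ by $(q'',p')(x_i)$. *)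

(* Defs.v *)
From Stdlib Require List.
From mathcomp Require Import all_boot.
Set Implicit Arguments. Unset Strict Implicit. Unset Printing Implicit Defensive.

Record ranked := Ranked { rsym :> finType; rank : rsym -> nat }.

Inductive tree (L : Type) := Node of L & seq (tree L).
Arguments Node {L}.

Fixpoint wr (F : ranked) (t : tree F) : bool :=
  let: Node a ts := t in (size ts == rank a) && all (@wr F) ts.

(* Right-hand sides: trees over an output alphabet D whose leaves may be
   q(x_i); [RCall q i] stands for q(x_{i+1}) (variables are 0-indexed). *)
Inductive rhs (Q D : Type) :=
| RNode of D & seq (rhs Q D)
| RCall of Q & nat.
Arguments RNode {Q D}.
Arguments RCall {Q D}.

Fixpoint rhs_wf (Q : Type) (D : ranked) (k : nat) (r : rhs Q D) : bool :=
  match r with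
  | RNode d rs => (size rs == rank d) && all (@rhs_wf Q D k) rs
  | RCall _ i => i < k
  end.

Fixpoint occurs (Q : eqType) (D : Type) (q' : Q) (i : nat) (r : rhs Q D) : bool :=
  match r with
  | RNode _ rs => has (@occurs Q D q' i) rs
  | RCall q j => (q == q') && (j == i)
  end.

(* Top-down tree transducer T = (Q, Sig, Del, R, q0) with finite rule set R;
   a rule (q, a, t) is  q(a(x_1..x_k)) -> t. *)
Record tdtt (Sig Del : ranked) := Tdtt {
  st : finType;
  q0 : st;
  rules : seq (st * Sig * rhs st Del) }.

Definition wf_td (Sig Del : ranked) (T : tdtt Sig Del) : Prop :=
  forall q a r, List.In (q, a, r) (rules T) -> rhs_wf (rank a) r.

Definition td_rules (Sig Del : ranked) (T : tdtt Sig Del)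
  : st T -> Sig -> rhs (st T) Del -> Prop :=
  fun q a r => List.In (q, a, r) (rules T).

(* Labels of sentential forms: states (unary), input symbols, output
   symbols, and unrewritable constant leaves. *)
Inductive slab (Q I O C : Type) :=
| LState of Q | LIn of I | LOut of O | LConst of C.
Arguments LState {Q I O C}. Arguments LIn {Q I O C}.
Arguments LOut {Q I O C}. Arguments LConst {Q I O C}.

Section Rewriting.
Variables (Q I O C : Type).
Notation sf := (tree (slab Q I O C)).

Fixpoint inst (r : rhs Q O) (ts : seq sf) : sf :=
  match r with
  | RNode d rs => Node (LOut d) (map (fun r' => inst r' ts) rs)
  | RCall q i => Node (LState q) [:: nth (Node (LState q) [::]) ts i]
  end.

Variable R : Q -> I -> rhs Q O -> Prop.

Inductive step : sf -> sf -> Prop :=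
| step_root q a ts r : R q a r ->
    step (Node (LState q) [:: Node (LIn a) ts]) (inst r ts)
| step_ctx l ts1 t t' ts2 : step t t' ->
    step (Node l (ts1 ++ t :: ts2)) (Node l (ts1 ++ t' :: ts2)).

Inductive derives : sf -> sf -> Prop :=
| der_refl t : derives t t
| der_step t t' t'' : step t t' -> derives t' t'' -> derives t t''.
End Rewriting.

Fixpoint embed_in (Q I O C : Type) (s : tree I) : tree (slab Q I O C) :=
  let: Node a ss := s in Node (LIn a) (map (@embed_in Q I O C) ss).
Fixpoint embed_out (Q I O C : Type) (t : tree O) : tree (slab Q I O C) :=
  let: Node a ts := t in Node (LOut a) (map (@embed_out Q I O C) ts).

Definition produces (Q I O : Type) (R : Q -> I -> rhs Q O -> Prop)
  (q : Q) (s : tree I) (t : tree O) : Prop :=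
  derives (C := void) R (Node (LState q) [:: @embed_in Q I O void s]) (@embed_out Q I O void t).

Definition in_dom (Q I : Type) (O : ranked) (R : Q -> I -> rhs Q O -> Prop)
  (q : Q) (s : tree I) : Prop :=
  exists t : tree O, wr t /\ produces R q s t.

Section DomAut.
Variables (Del Om : ranked) (T : tdtt Del Om).

Definition dom_aut_init : {set st T} := [set q0 T].

Definition dom_aut_rules (S : {set st T}) (a : Del) (r : rhs {set st T} Del)
  : Prop :=
  exists Si : nat -> {set st T},
    r = RNode a [seq RCall (Si i) i | i <- iota 0 (rank a)] /\
    ( (S = set0 /\ forall i, i < rank a -> Si i = set0)
    \/ (S != set0 /\
        exists Gamma : st T -> seq (rhs (st T) Om),
          (forall q, q \in S -> Gamma q <> [::] /\
             forall g, List.In g (Gamma q) -> List.In (q, a, g) (rules T)) /\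
          (forall i, i < rank a -> forall q',
             q' \in Si i <->
             exists q, q \in S /\ exists g, List.In g (Gamma q) /\ occurs q' i g))).
End DomAut.

Section Product.
Variables (Sig Del Om : ranked) (Q Q' : Type).
Variable R : Q -> Sig -> rhs Q Del -> Prop.
Variable R' : Q' -> Del -> rhs Q' Om -> Prop.
Notation sf := (tree (slab Q' Del Om (Q * nat))).

(* xi, with leaves q''(x_i) as unrewritable constants *)
Fixpoint rhs_as_input (xi : rhs Q Del) : sf :=
  match xi with
  | RNode d xs => Node (LIn d) (map rhs_as_input xs)
  | RCall q i => Node (LConst (q, i)) [::]
  end.

(* zeta' seen as zeta: (q'',p')(x_i) becomes p'(q''(x_i)) *)
Fixpoint prod_rhs_as_sf (z : rhs (Q * Q') Om) : sf :=
  match z with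
  | RNode w zs => Node (LOut w) (map prod_rhs_as_sf zs)
  | RCall (q, p) i => Node (LState p) [:: Node (LConst (q, i)) [::]]
  end.

Definition prod_rules (qp : Q * Q') (a : Sig) (z : rhs (Q * Q') Om) : Prop :=
  exists xi, R qp.1 a xi /\
    derives R' (Node (LState qp.2) [:: rhs_as_input xi]) (prod_rhs_as_sf z).
End Product.

Arguments td_rules [Sig Del] T _ _ _.
Arguments dom_aut_rules [Del Om] T S%_set_scope a r.
Arguments dom_aut_init [Del Om] T.

(* Main.v *)
Require Import Defs.
From mathcomp Require Import all_boot.
Set Implicit Arguments. Unset Strict Implicit. Unset Printing Implicit Defensive.

Fixpoint tree_ind' L (P : tree L -> Prop)
  (f : forall l ts, List.Forall P ts -> P (Node l ts)) (t : tree L) : P t :=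
  match t with Node l ts => f l ts
    ((fix go ts := match ts return List.Forall P ts with
       | [::] => List.Forall_nil _
       | t :: ts' => List.Forall_cons _ (tree_ind' f t) (go ts') end) ts) end.

Fixpoint rhs_ind' Q D (P : rhs Q D -> Prop)
  (f : forall d rs, List.Forall P rs -> P (RNode d rs))
  (g : forall q i, P (RCall q i)) (r : rhs Q D) : P r :=
  match r with
  | RNode d rs => f d rs
    ((fix go rs := match rs return List.Forall P rs with
       | [::] => List.Forall_nil _
       | r :: rs' => List.Forall_cons _ (rhs_ind' f g r) (go rs') end) rs)
  | RCall q i => g q i end.

Lemma Forall_nth' T (P : T -> Prop) x0 s i : List.Forall P s -> i < size s -> P (nth x0 s i).
Proof. move=> H; elim: H i => [|x s' Px _ IH] [|i] //=; exact: IH. Qed.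

Lemma Forall2_nth A B (P : A -> B -> Prop) xs ys : List.Forall2 P xs ys ->
  size xs = size ys /\ forall x0 y0 i, i < size xs -> P (nth x0 xs i) (nth y0 ys i).
Proof.
elim=> [|x y xs' ys' Pxy _ [IH1 IH2]] /=; first by split.
split; first by rewrite IH1.
by move=> x0 y0 [|i] //= Hi; apply: IH2.
Qed.

Lemma Forall_all T (P : T -> Prop) (b : pred T) s : List.Forall P s -> (forall x, P x -> b x) -> all b s.
Proof. by move=> H Hb; elim: H => //= x s' Px _ ->; rewrite Hb. Qed.

Section Gen.
Variables (Q I O C : Type) (R : Q -> I -> rhs Q O -> Prop).
Notation sf := (tree (slab Q I O C)).
Notation DR := (@derives Q I O C R).

Lemma derives_trans (a b c : sf) : DR a b -> DR b c -> DR a c.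
Proof. elim=> // x y z S _ IH H; apply: der_step S (IH H). Qed.

Lemma derives_lift l pre post (x y : sf) : DR x y ->
  DR (Node l (pre ++ x :: post)) (Node l (pre ++ y :: post)).
Proof. elim=> [t|t t' t'' S _ IH]; first exact: der_refl. exact: der_step (step_ctx _ _ _ S) IH. Qed.

Lemma derives_cong l pre ts us : List.Forall2 (DR) ts us ->
  DR (Node l (pre ++ ts)) (Node l (pre ++ us)).
Proof.
move=> H; elim: H pre => [|x y ts' us' Dxy _ IH] pre; first exact: der_refl.
apply: derives_trans (derives_lift l pre ts' Dxy) _.
by rewrite -!cat_rcons; apply: IH.
Qed.

Lemma F2_step (t t' : sf) ts1 ts2 us : step R t t' ->
  List.Forall2 (DR) (ts1 ++ t' :: ts2) us -> List.Forall2 (DR) (ts1 ++ t :: ts2) us.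
Proof.
move=> S; elim: ts1 us => [|x ts1 IH] us /= H; inversion H; subst.
  by constructor => //; apply: der_step S _.
by constructor => //; apply: IH.
Qed.

Lemma derives_node l ts u : (forall q, l <> LState q) -> DR (Node l ts) u ->
  exists us, u = Node l us /\ List.Forall2 (DR) ts us.
Proof.
move=> Hl D; remember (Node l ts) as t0 eqn:E; elim: D ts E => [t|t t' t'' S D IH] ts E.
  exists ts; split => //; subst; elim: ts => //= x ts IH; constructor => //; exact: der_refl.
subst; inversion S; subst; first by case: (Hl q).
have [us [-> F]] := IH _ erefl; exists us; split => //; apply: F2_step F; eassumption.
Qed.

Lemma derives_nil l u : DR (Node l [::]) u -> u = Node l [::].
Proof.
move=> D; inversion D as [|a b c St Dr]; subst => //.
inversion St; subst.
exfalso; match goal with H : _ ++ _ :: _ = _ |- _ => by case: ts1 H {Dr St D} end.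
Qed.

Lemma derives_state q x u : DR (Node (LState q) [:: x]) u ->
  (exists x', u = Node (LState q) [:: x'] /\ DR x x') \/
  (exists a ts r, DR x (Node (LIn a) ts) /\ R q a r /\ DR (inst r ts) u).
Proof.
move=> D; remember (Node (LState q) [:: x]) as t0 eqn:E.
elim: D x E => [t|t t' t'' S D IH] x E.
  by left; exists x; split => //; exact: der_refl.
subst; inversion S; subst.
  by right; exists a, ts, r; split => //; exact: der_refl.
match goal with H : _ ++ _ :: _ = [:: _] |- _ => move: H end.
case: ts1 IH D S => [|y [|z ts1]] //= IH D S [? ?]; subst.
case: (IH t'0 erefl) => [[x' [-> D']]|[a [ts [r [D1 [Rr D2]]]]]].
  by left; exists x'; split => //; apply: der_step D'; eassumption.
by right; exists a, ts, r; split => //; apply: der_step D1; eassumption.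
Qed.

Fixpoint sfree (t : sf) : bool :=
  let: Node l ts := t in (if l is LState _ then false else true) && all sfree ts.

Lemma step_sfree (t t' : sf) : step R t t' -> sfree t = false.
Proof. elim=> // l ts1 t0 t1 ts2 _ IH; by rewrite /= all_cat /= IH /= !andbF. Qed.

Lemma derives_sfree (t u : sf) : DR t u -> sfree t -> u = t.
Proof. case=> // x y z S _; by rewrite (step_sfree S). Qed.

End Gen.

Section Main.
Variables (Sig Del Om : ranked) (T1 : tdtt Sig Del) (T2 : tdtt Del Om).
Hypotheses (wf1 : wf_td T1) (wf2 : wf_td T2).

Notation Q1 := (st T1). Notation Q2 := (st T2). Notation PS := {set st T2}.
Notation RA := (dom_aut_rules T2).
Notation RP := (prod_rules (td_rules T1) (dom_aut_rules T2)).
Notation R2 := (td_rules T2).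
Notation DA := (@derives PS Del Del (Q1 * nat) RA).
Notation DP := (@derives (Q1 * PS) Sig Del void RP).
Notation D2 := (@derives Q2 Del Om void R2).

Definition Dom (p : PS) (t : tree Del) := forall q2, q2 \in p -> in_dom R2 q2 t.

Inductive HH : rhs (Q1 * PS) Del -> tree Del -> Prop :=
| HH_node w zs ts : List.Forall2 HH zs ts -> HH (RNode w zs) (Node w ts)
| HH_call q p i t : (p != set0 -> Dom p t) -> HH (RCall (q, p) i) t.

Lemma occurs_wf (Q : eqType) (D : ranked) (q' : Q) i k (g : rhs Q D) :
  rhs_wf k g -> occurs q' i g -> i < k.
Proof.
elim/rhs_ind': g => [d rs IH|q j] /=; last by move=> ? /andP[_ /eqP <-].
move=> /andP[_]; elim: IH => //= r rs' Hr _ IH /andP[w1 w2] /orP[]; first exact: Hr.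
exact: IH.
Qed.

Notation EO o := (@embed_out Q2 Del Om void o).

Lemma bigC (g : rhs Q2 Om) k (ES : seq (tree (slab Q2 Del Om void))) : rhs_wf k g ->
  (forall q' i, occurs q' i g -> exists o, wr o /\ D2 (inst (RCall q' i) ES) (EO o)) ->
  exists o, wr o /\ D2 (inst g ES) (EO o).
Proof.
elim/rhs_ind': g => [d rs IH|q j] /=; last by move=> _ H; apply: H; rewrite /= !eqxx.
move=> /andP[/eqP Hs Hw] H.
have [os [Hwo [Hso F]]] : exists os, all (@wr Om) os /\ size os = size rs /\
    List.Forall2 D2 (map (fun r => inst r ES) rs) (map (fun o => EO o) os).
  elim: IH Hw H {Hs} => [|r rs' Hr _ IH] /=; first by exists [::].
  move=> /andP[w1 w2] H.
  have [o [wo Do]] := Hr w1 (fun q' i h => H q' i (introT orP (or_introl h))).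
  have [os [w' [s' F]]] := IH w2 (fun q' i h => H q' i (introT orP (or_intror h))).
  by exists (o :: os); rewrite /= wo w' s'; split => //; split => //; constructor.
exists (Node d os); split; first by rewrite /= Hso Hs eqxx.
by rewrite /=; apply: (derives_cong _ [::]).
Qed.

Notation EI t := (@embed_in Q2 Del Om void t).
Notation RI xi := (@rhs_as_input Del Del Q1 PS xi).
Notation PZ z := (@prod_rhs_as_sf Del Del Q1 PS z).

Lemma sfree_RI xi : sfree (RI xi).
Proof.
elim/rhs_ind': xi => [d xs IH|q i] //=; rewrite all_map; apply: Forall_all IH _ => x //.
Qed.

Lemma lemG (xi : rhs Q1 Del) k : rhs_wf k xi -> forall S z t,
  DA (Node (LState S) [:: RI xi]) (PZ z) -> HH z t -> S != set0 -> Dom S t.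
Proof.
elim/rhs_ind': xi => [d xs IH|q'' i] /=; last first.
  move=> _ S z t D Hz HS.
  case: (derives_state D) => [[x' [E D']]|[a [ts [r [D1 _]]]]]; last first.
    by have := derives_sfree D1 erefl.
  have E' := derives_sfree D' erefl; subst x'.
  clear D; case: z E Hz => [w zs|[q0 p] j] //= [-> -> ->] Hz.
  by inversion Hz; subst; auto.
move=> /andP[/eqP Hs Hw] S z t D Hz HS.
case: (derives_state D) => [[x' [E D']]|[a [ts [r [D1 [Rr D2']]]]]].
  have E' := derives_sfree D' (sfree_RI (RNode d xs)).
  by clear D; case: z E Hz => [w zs|[q0 p] j] //= [_ E2]; rewrite E' in E2.
have := derives_sfree D1 (sfree_RI (RNode d xs)); case=> ? ?; subst.
case: Rr => Si [Er [[HS0 _]|[_ [Gamma [HG HSi]]]]]; subst r; first by rewrite HS0 eqxx in HS.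
rewrite /= -map_comp in D2'.
have [us [Eu F]] := derives_node (fun q => (fun e : LOut d = LState q => ltac:(discriminate))) D2'.
clear D D1 D2'.
case: z Eu Hz => [w zs|[q0 p] j] //= [? Eu] Hz; subst w us.
inversion Hz as [w zs' ts' F2 E1 E2|]; subst.
have [Fs Fn] := Forall2_nth F.
have [Hs2 Hn2] := Forall2_nth F2.
rewrite size_map size_map size_iota in Fs.
move=> q2 Hq2.
have [Gne Gin] := HG q2 Hq2.
case EG: (Gamma q2) Gne => [|g gs] // _.
have Rg : List.In (q2, d, g) (rules T2) by apply: Gin; rewrite EG; left.
have wg := wf2 Rg.
have key : forall q' i, occurs q' i g ->
    exists o, wr o /\ D2 (inst (RCall q' i) (map (fun t => EI t) ts')) (EO o).
  move=> q' i Ho.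
  have Hi := occurs_wf wg Ho.
  have Hq' : q' \in Si i.
    by apply/(HSi i Hi q'); exists q2; split => //; exists g; split => //; rewrite EG; left.
  have HSi0 : Si i != set0 by apply/set0Pn; exists q'.
  have Hxi : i < size xs by rewrite Hs.
  have Hwi := (all_nthP (RNode d [::]) Hw) i Hxi.
  have Di := Fn (Node (LIn d) [::]) (Node (LIn d) [::]) i ltac:(by rewrite size_map size_iota).
  rewrite (nth_map 0) ?size_iota // nth_iota // /= add0n in Di.
  rewrite (nth_map (RNode d [::])) // (nth_map (RNode d [::])) -?Fs // in Di.
  have IHi := Forall_nth' (RNode d [::]) IH Hxi.
  have Dm := IHi Hwi (Si i) (nth (RNode d [::]) zs i) (nth (Node d [::]) ts' i) Di
     (Hn2 _ _ i ltac:(by rewrite -Fs)) HSi0.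
  have [o [wo Po]] := Dm q' Hq'.
  exists o; split => //.
  by rewrite /= (nth_map (Node d [::])) // -Hs2 -Fs.
have [o [wo Do]] := bigC wg key.
exists o; split => //.
rewrite /produces /=.
apply: der_step Do; exact: step_root.
Qed.

Notation EIs s := (@embed_in (Q1 * PS) Sig Del void s).
Notation EOs t := (@embed_out (Q1 * PS) Sig Del void t).

Lemma sfree_EI s : sfree (EIs s).
Proof. elim/tree_ind': s => a ss IH /=; rewrite all_map; exact: Forall_all IH _. Qed.

Lemma main_lemma (s : tree Sig) : forall q S t,
  DP (Node (LState (q, S)) [:: EIs s]) (EOs t) -> S != set0 -> Dom S t.
Proof.
elim/tree_ind': s => a ss IH q S t D HS.
case: (derives_state D) => [[x' [E _]]|[a' [ts [r [D1 [Rr D2']]]]]]; first by case: t E D.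
have := derives_sfree D1 (sfree_EI (Node a ss)); case=> ? ?; subst.
case: Rr => xi [Hxi Dxi]; rewrite /= in Hxi Dxi.
have M : forall z t, DP (inst z (map (fun s => EIs s) ss)) (EOs t) -> HH z t.
  elim/rhs_ind' => [w zs IHz|[q'' p] i] t0 Dz.
    rewrite /= in Dz.
    have [us [Eu F]] := derives_node (fun q => (fun e : LOut w = LState q => ltac:(discriminate))) Dz.
    case: t0 Eu {Dz} => w' ts /= [? ?]; subst; constructor.
    elim: IHz ts F => [|z zs' Hz _ IHl] ts F; case: ts F => [|t1 ts1] F /=; inversion F; subst.
      by constructor.
    by constructor; auto.
  constructor => Hp; rewrite /= in Dz.
  case: (ltnP i (size ss)) => Hi.
    rewrite (nth_map (Node a [::])) // in Dz.
    exact: (Forall_nth' (Node a [::]) IH Hi) q'' p t0 Dz Hp.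
  rewrite nth_default ?size_map // in Dz.
  case: (derives_state Dz) => [[x' [E _]]|[a' [ts [r' [D3 _]]]]]; first by case: t0 E Dz.
  by have := derives_nil D3.
have HZ := M _ _ D2'. apply: (lemG (wf1 Hxi)) HZ HS. exact Dxi.
Qed.

End Main.

Theorem lemma2 (Sig Del Om : ranked) (T1 : tdtt Sig Del) (T2 : tdtt Del Om) :
  wf_td T1 -> wf_td T2 ->
  forall (q : st T1) (S : {set st T2}) (s : tree Sig) (t : tree Del),
    wr s -> wr t ->
    produces (prod_rules (td_rules T1) (dom_aut_rules T2)) (q, S) s t ->
    S != set0 ->
    forall q2 : st T2, q2 \in S -> in_dom (td_rules T2) q2 t.
Proof.
move=> wf1 wf2 q S s t _ _ P HS.
exact: (main_lemma wf1 wf2 P HS).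
Qed.
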